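(* For each of the following monads $T$, the associated monad $D$ is idempotent: (a) the Giry monad $P$ of probability measures on $\mathbf{Meas}$; (b) the monad $M$ of subprobability measures on $\mathbf{Meas}$; (c) the lower Vietoris monad $H$ on $\mathbf{Top}$.
   Context: $\mathbf{Meas}$ is the category of measurable spaces and measurable maps. $PX$ is the set of probability measures on $X$, with the coarsest $\sigma$-algebra making $p\mapsto p(A)$ measurable for every measurable $A\subseteq X$; $\eta_X(x)=\delta_x$; $\mu_X(\rho)(A)=\int_{PX}p(A)\,\rho(dp)$; $Pf$ is pushforward. $M$ is defined identically with subprobability measures ($0\le m(X)\le1$). $\mathbf{Top}$ is the category of topological spaces; $HX$ is the set of closed subsets of $X$ (including $\emptyset$) with topology generated by the sets $\{C: C\cap U\neq\emptyset\}$ for $U\subseteq X$ open; $\eta_X(x)=\overline{\{x\}}$; $\mu_X(\mathcal{C})=\overline{\bigcup_{C\in\mathcal{C}}C}$; $Hf(C)=\overline{f(C)}$. For a monad $T$ on $\mathbb{C}$, $\theta_X:DX\to TX$ denotes the equalizer of $\eta_{TX},T\eta_X:TX\to TTX$; $D$ is a monad with $Dg$ the unique map with $\theta_Z\circ Dg=Tg\circ\theta_Y$, unit $e_X$ the unique map with $\theta_X\circ e_X=\eta_X$, and multiplication $m_X$ the unique map with $\theta_X\circ m_X=\mu_X\circ T\theta_X\circ\theta_{DX}$. A monad is idempotent if its multiplication is an isomorphism. *)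

(* Defs.v *)
From HB Require Import structures.
From mathcomp Require Import all_boot all_order all_algebra.
From mathcomp Require Import all_classical all_reals all_analysis.
From mathcomp Require Import giry.

Set Implicit Arguments.
Unset Strict Implicit.
Unset Printing Implicit Defensive.
Import Order.TTheory GRing.Theory Num.Theory.

Local Open Scope classical_set_scope.
Local Open Scope ereal_scope.

(* Subspaces in Meas: a subset S (containing a given point, since mathcomp    *)
(* measurable types are pointed) of a measurable space, with the trace       *)
(* sigma-algebra { val^-1 B | B measurable }.  This is the equalizer object   *)
(* in Meas.                                                                   *)
Section msub.
Context {d} (T : measurableType d) (S : set T) (x0 : T) (h : S x0).

(* the carrier mentions the witness h so that the pointed instance below
   is keyed on it *)
Definition msub_car of S x0 : Type := {x : T | S x}.
HB.instance Definition _ := gen_eqMixin (msub_car h).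
HB.instance Definition _ := gen_choiceMixin (msub_car h).
HB.instance Definition _ :=
  isPointed.Build (msub_car h) (exist _ x0 h : msub_car h).

Definition msub_val : msub_car h -> T := @proj1_sig T S.

Definition msub := g_sigma_algebra_preimageType msub_val.
End msub.

Definition meq {d} {T : measurableType d} {R : realType}
  (mu nu : set T -> \bar R) : Prop :=
  forall A, measurable A -> mu A = nu A.

(* PX = pprobability X R (probability measures, sigma-algebra generated by    *)
(* the evaluation maps p |-> p A, A measurable).                              *)
Section Pmonad.
Context (R : realType).

Definition Peta {d} {X : measurableType d} (x : X) : pprobability X R :=
  (@dirac _ _ x R : probability X R).

Definition Pmu {d} {X : measurableType d}
  (rho : set (pprobability X R) -> \bar R) (A : set X) : \bar R :=
  integral rho setT (fun p : pprobability X R => (p : probability X R) A).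

(* the equalizer of eta_{PX} and P eta_X : PX -> PPX, as a subset of PX.
   Both sides are measures on PX, compared on measurable subsets of PX;
   P eta_X is the pushforward along eta_X. *)
Definition PDset {d} (X : measurableType d) : set (pprobability X R) :=
  [set p : pprobability X R | meq (@dirac _ _ p R) (pushforward (p : probability X R) (@Peta d X))].

Arguments PDset {d} X.

Lemma PDset_eta {d} (X : measurableType d) : PDset X (Peta (point : X)).
Proof. by move=> B mB; rewrite /pushforward /=. Qed.

Definition PD {d} (X : measurableType d) := msub (@PDset_eta d X).
Definition Ptheta {d} (X : measurableType d) : PD X -> pprobability X R :=
  @msub_val _ _ _ _ (@PDset_eta d X).
End Pmonad.

(* (b) The monad M of subprobability measures: MX = giry X R.                 *)
Section Mmonad.
Context (R : realType).

Definition Meta {d} {X : measurableType d} (x : X) : giry X R := giry_ret x.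

Definition Mmu {d} {X : measurableType d}
  (rho : set (giry X R) -> \bar R) (A : set X) : \bar R :=
  integral rho setT (fun p : giry X R => p A).

Definition MDset {d} (X : measurableType d) : set (giry X R) :=
  [set p : giry X R | meq (@dirac _ _ p R) (pushforward p (@Meta d X))].

Arguments MDset {d} X.

Lemma MDset_eta {d} (X : measurableType d) : MDset X (Meta (point : X)).
Proof. by move=> B mB; rewrite /pushforward /=. Qed.

Definition MD {d} (X : measurableType d) := msub (@MDset_eta d X).
Definition Mtheta {d} (X : measurableType d) : MD X -> giry X R :=
  @msub_val _ _ _ _ (@MDset_eta d X).
End Mmonad.

Section Hmonad.

Definition Hsp (X : topologicalType) : Type := {C : set X | closed C}.
HB.instance Definition _ (X : topologicalType) := gen_eqMixin (Hsp X).
HB.instance Definition _ (X : topologicalType) := gen_choiceMixin (Hsp X).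
HB.instance Definition _ (X : topologicalType) :=
  @isSubBaseTopological.Build (Hsp X) (set X) open
    (fun U => [set C : Hsp X | (proj1_sig C `&` U) !=set0]).

Definition Hval {X : topologicalType} (C : Hsp X) : set X := proj1_sig C.

Definition Heta {X : topologicalType} (x : X) : Hsp X :=
  exist _ (closure [set x]) (@closed_closure X [set x]).

Definition Hmap {X Y : topologicalType} (f : X -> Y) (C : Hsp X) : Hsp Y :=
  exist _ (closure (f @` Hval C)) (@closed_closure Y (f @` Hval C)).

Definition Hmu {X : topologicalType} (CC : Hsp (Hsp X)) : Hsp X :=
  exist _ (closure (\bigcup_(C in Hval CC) Hval C))
    (@closed_closure X (\bigcup_(C in Hval CC) Hval C)).

Definition HDset (X : topologicalType) : set (Hsp X) :=
  [set C | Heta C = Hmap Heta C].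
Arguments HDset X : clear implicits.

Definition HD (X : topologicalType) : Type := set_type (HDset X).
HB.instance Definition _ (X : topologicalType) :=
  Topological.on (HD X).
Definition Htheta {X : topologicalType} : HD X -> Hsp X := @set_val _ (HDset X).

End Hmonad.

(* Main.v *)
Require Import Defs.
From HB Require Import structures.
From mathcomp Require Import all_boot all_order all_algebra.
From mathcomp Require Import all_classical all_reals all_analysis giry.
From mathcomp Require Import measurable_realfun lebesgue_integral.
Import Order.TTheory GRing.Theory Num.Theory.

Local Open Scope classical_set_scope.
Local Open Scope ereal_scope.

Lemma sat_gen (T : Type) (G : set (set T)) (E : T -> T -> Prop) :
  (forall B, G B -> forall p q, E p q -> (B p <-> B q)) ->
  forall B, <<s G >> B -> forall p q, E p q -> (B p <-> B q).
Proof.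
move=> hG; apply: smallest_sub; last exact: hG.
split.
- by move=> p q _.
- move=> A hA p q e /=; split=> -[_ nA]; split=> // Aq; apply: nA; exact/(hA p q e).
- move=> F hF p q e; split=> -[n _ Fn]; exists n => //; exact/(hF n p q e).
Qed.

Lemma msub_meas {d} {T : measurableType d} {S : set T} {x0 : T} {h : S x0} :
  measurable_fun setT (msub_val (h:=h) : msub h -> T).
Proof. move=> _ B mB. exists B. exact: mB. by []. Qed.

Lemma into_msub {d} {T : measurableType d} {S : set T} {x0 : T} {h : S x0}
  d' (Z : measurableType d') (f : Z -> msub h) :
  measurable_fun setT ((msub_val (h:=h) : msub h -> T) \o f) -> measurable_fun setT f.
Proof.
move=> mf _ A [B mB <-]; rewrite setTI; exact: mf measurableT B mB.
Qed.

Section PartA.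
Context (R : realType).

Lemma ev_P {d'} {T : measurableType d'} {A : set T} : measurable A ->
  measurable_fun setT (fun p : pprobability T R => (p : probability T R) A).
Proof.
move=> mA.
move=> _; apply: (measurability _ (ErealGenInftyO.measurableE R)) => //.
move=> _ [_ [r ->] <-].
have -> : [set: pprobability T R] `&` (fun p : pprobability T R => (p : probability T R) A) @^-1` `]-oo, r%:E[ = mset A r.
  apply/seteqP; split => p /=; rewrite in_itv /=.
    by case.
  by [].
have [r0|r0] := ltP r 0%R.
  rewrite lt0_mset //; exact: measurable0.
have [r1|r1] := ltP 1%R r.
  rewrite gt1_mset //; exact: measurableT.
apply: sub_sigma_algebra; exists r; first by rewrite /= in_itv /= r0 r1.
by exists A.
Qed.


Lemma P_sat {d'} {T : measurableType d'} {B : set (pprobability T R)} :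
  measurable B -> forall p q : pprobability T R,
  meq (p : probability T R) (q : probability T R) -> B p -> B q.
Proof.
move=> mB p q e.
have hG : forall B, (@pset _ T R) B ->
    forall p q : pprobability T R, meq (p : probability T R) (q : probability T R) -> B p <-> B q.
  move=> _ [r r01 [U mU <-]] p' q' e' /=.
  by rewrite /mset /= (e' U mU).
exact: (proj1 (@sat_gen _ _ _ hG B mB p q e)).
Qed.

Definition iota {d'} {T : measurableType d'} (p : pprobability T R) : giry T R :=
  (p : probability T R) : subprobability T R.

Lemma m_iota d' (T : measurableType d') : measurable_fun setT (@iota d' T).
Proof. apply: measurable_giry_codensity => // B mB; exact: ev_P. Qed.

Lemma ev_comp d' (T : measurableType d') d'' (Z : measurableType d'')
  (f : Z -> giry T R) (A : set T) :
  measurable A -> measurable_fun setT f -> measurable_fun setT (fun z => f z A).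
Proof.
move=> mA mf _ B mB.
have := measurable_giry_ev (R:=R) mA measurableT mB; rewrite setTI => h.
by have := mf measurableT _ h; rewrite !setTI.
Qed.

Lemma ev_compP d' (T : measurableType d') d'' (Z : measurableType d'')
  (f : Z -> pprobability T R) (A : set T) :
  measurable A -> measurable_fun setT f ->
  measurable_fun setT (fun z => (f z : probability T R) A).
Proof.
move=> mA mf _ B mB.
have := ev_P mA measurableT B mB; rewrite setTI => h.
by have := mf measurableT _ h; rewrite !setTI.

Qed.

Lemma mPeta d' (T : measurableType d') : measurable_fun setT (@Peta R d' T).
Proof.
move=> _.
apply: (measurability (@pset _ _ _ : set (set (pprobability T R)))) => //.
move=> _ [_ [r r01 [U mU <-]] <-].
rewrite (_ : _ `&` _ = [set: T] `&` [set x | (\d_x U)%R < r%:E]).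
  apply: emeasurable_fun_infty_o => //; exact: measurable_fun_dirac.
by apply/seteqP; split => x.
Qed.

Section PartAX.
Context (d : measure_display) (X : measurableType d).

Local Notation Y := (PD R X).
Local Notation th := (@Ptheta R d X).

Lemma mth : measurable_fun setT th.
Proof. exact: msub_meas. Qed.

Definition thi : Y -> giry X R := @iota _ X \o th.

Lemma mthi : measurable_fun setT thi.
Proof. exact: measurableT_comp (@m_iota _ X) mth. Qed.

Definition Phi0 (s : pprobability Y R) : giry X R :=
  giry_join (giry_map mthi (iota s)).

Lemma mPhi0 : measurable_fun setT Phi0.
Proof.
apply: measurableT_comp measurable_giry_join _.
exact: measurableT_comp (measurable_giry_map mthi) (@m_iota _ Y).
Qed.

Lemma Phi0E s A : measurable A ->
  Phi0 s A = \int[(s : probability Y R)]_y (th y : probability X R) A.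
Proof.
move=> mA; rewrite /Phi0 /= giry_int_map //; exact: measurable_giry_ev.
Qed.


Lemma Phi0T s : Phi0 s setT = 1.
Proof.
rewrite Phi0E //.
rewrite (eq_integral (cst 1)); last by move=> y _; rewrite probability_setT.
rewrite integral_cst // mul1e; exact: probability_setT.
Qed.

Definition PhiP (s : pprobability Y R) : pprobability X R :=
  mnormalize (Phi0 s) point.

Lemma PhiPE s A : (PhiP s : probability X R) A = Phi0 s A.
Proof.
have h1 : (Phi0 s : measure X R) setT = 1 := Phi0T s.
rewrite /PhiP /= /mnormalize h1.
by rewrite onee_eq0 /= invr1 mule1.
Qed.

Lemma mPhiP : measurable_fun setT PhiP.
Proof.
move=> _.
apply: (measurability (@pset _ _ _ : set (set (pprobability X R)))) => //.
move=> _ [_ [r r01 [U mU <-]] <-].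
rewrite (_ : _ `&` _ = [set: pprobability Y R] `&` [set s | Phi0 s U < r%:E]).
  apply: emeasurable_fun_infty_o => //; exact: ev_comp mU mPhi0.
by apply/seteqP; split => s /=; rewrite /mset /= PhiPE.
Qed.

Lemma PhiP_ret (y : Y) : meq (PhiP (Peta R y) : probability X R) (th y : probability X R).
Proof.
move=> A mA; rewrite PhiPE Phi0E //.
rewrite integral_dirac //; first by rewrite diracT mul1e.
exact: ev_compP mA mth.
Qed.

Lemma key_P {s : pprobability Y R} (hs : @PDset R _ Y s) {B : set (pprobability X R)} :
  measurable B -> (\d_(PhiP s))%R B = (s : probability Y R) (th @^-1` B).
Proof.
move=> mB.
have mC : measurable (PhiP @^-1` B) by have := mPhiP measurableT B mB; rewrite setTI.
have := hs _ mC; rewrite /pushforward /=.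
have -> : (@Peta R _ Y) @^-1` (PhiP @^-1` B) = th @^-1` B.
  apply/seteqP; split => y /=.
    exact: (P_sat mB _ _ (PhiP_ret y)).
  by apply: (P_sat mB) => A mA; rewrite (PhiP_ret y A mA).
by move=> <-; rewrite !diracE.
Qed.


Lemma PhiP_PD {s : pprobability Y R} (hs : @PDset R _ Y s) : @PDset R _ X (PhiP s).
Proof.
move=> B mB; rewrite key_P //.
have mB' : measurable (@Peta R _ X @^-1` B).
  by have := @mPeta _ X measurableT B mB; rewrite setTI.
rewrite /pushforward PhiPE Phi0E //.
have mthB : measurable (th @^-1` B) by have := mth measurableT B mB; rewrite setTI.
rewrite -(setIT (th @^-1` B)) -integral_indic //.
apply: eq_integral => y _ /=.
have := proj2_sig y B mB; rewrite /pushforward => <-.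
rewrite diracE indicE; congr (_%:R%:E); try by apply/idP/idP => /set_mem h; apply/mem_set.
Qed.

Definition mP (rho : PD R Y) : Y :=
  exist _ (PhiP (Ptheta rho)) (PhiP_PD (proj2_sig rho)).

Lemma gP_proof (p : Y) : @PDset R _ Y (Peta R p).
Proof. by move=> B mB; rewrite /pushforward /=. Qed.

Definition gP (p : Y) : PD R Y := exist _ (Peta R p) (gP_proof p).

Lemma partA_X :
    exists m : PD R (PD R X) -> PD R X,
      measurable_fun setT m /\
      (forall rho : PD R (PD R X),
         meq (Ptheta (m rho) : probability X R)
             (Pmu (pushforward (Ptheta rho : probability (PD R X) R)
                               (@Ptheta R d X)))) /\
      exists g : PD R X -> PD R (PD R X),
        measurable_fun setT g /\
        (forall p : PD R X,
           meq (Ptheta (m (g p)) : probability X R) (Ptheta p : probability X R)) /\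
        (forall rho : PD R (PD R X),
           meq (Ptheta (g (m rho)) : probability (PD R X) R)
               (Ptheta rho : probability (PD R X) R)).
Proof.
exists mP; split.
  apply: into_msub.
  exact: measurableT_comp mPhiP (@msub_meas _ _ _ _ (@PDset_eta R _ Y)).
split.
  move=> rho A mA.
  rewrite /Pmu (@ge0_integral_pushforward _ _ _ _ R th mth) //; last first.
    exact: ev_P.
  rewrite preimage_setT.
  transitivity (Phi0 (Ptheta rho) A); first exact: PhiPE.
  exact: Phi0E.
exists gP; split.
  apply: into_msub.
  exact: mPeta.
split.
  by move=> p; exact: PhiP_ret.
move=> rho _ [B mB <-]; rewrite setTI.
have := key_P (proj2_sig rho) mB.
rewrite [X in _ = X -> _]/= => <-.
rewrite /= !diracE; congr (_%:R%:E); try by apply/idP/idP => /set_mem h; apply/mem_set.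
Qed.

End PartAX.
End PartA.

Lemma giry_sat {d} {X : measurableType d} {R : realType} {B : set (giry X R)} :
  measurable B -> forall p q : giry X R, p ≡μ q -> B p -> B q.
Proof.
move=> mB p q e.
have hG : forall B, (\bigcup_(A in measurable) preimg_giry_ev A) B ->
    forall p q : giry X R, p ≡μ q -> B p <-> B q.
  move=> _ [A mA [E mE <-]] p' q' e' /=.
  by rewrite /giry_ev (e' A mA).
exact: (proj1 (@sat_gen _ _ _ hG B mB p q e)).
Qed.

Lemma mth_gen (R : realType) d (X : measurableType d) :
  measurable_fun setT (@Mtheta R d X).
Proof. move=> _ B mB. exists B. exact: mB. by []. Qed.

Lemma meas_into_MD (R : realType) d (X : measurableType d) d' (Z : measurableType d')
  (f : Z -> MD R X) :
  measurable_fun setT (@Mtheta R d X \o f) -> measurable_fun setT f.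
Proof.
move=> mf _ A [B mB <-]; rewrite setTI; exact: mf measurableT B mB.
Qed.

Section PartB.
Context (R : realType) (d : measure_display) (X : measurableType d).

Local Notation Y := (MD R X).
Local Notation th := (@Mtheta R d X).

Local Notation mth := (@mth_gen R d X).

Definition Phi (s : giry Y R) : giry X R := giry_join (giry_map mth s).

Lemma mPhi : measurable_fun setT Phi.
Proof. exact: measurableT_comp measurable_giry_join (measurable_giry_map mth). Qed.

Lemma PhiE (s : giry Y R) A : measurable A -> Phi s A = \int[s]_y th y A.
Proof.
move=> mA; rewrite /Phi /= giry_int_map //; exact: measurable_giry_ev.
Qed.

Lemma mth_comp (g : giry X R -> \bar R) :
  measurable_fun setT g -> measurable_fun setT (g \o th).
Proof.
move=> mg _ B mB; exists (g @^-1` B) => //.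
by have := mg measurableT B mB; rewrite setTI.
Qed.

Lemma Phi_ret (y : Y) : Phi (giry_ret y) ≡μ th y.
Proof.
move=> A mA /=; rewrite giry_int_map //; last exact: measurable_giry_ev.
rewrite giry_int_ret //.
apply: mth_comp; exact: measurable_giry_ev.
Qed.

Lemma key {s : giry Y R} (hs : @MDset R _ Y s) {B : set (giry X R)} :
  measurable B -> (\d_(Phi s))%R B = s (th @^-1` B).
Proof.
move=> mB.
have mC : measurable (Phi @^-1` B) by have := mPhi measurableT B mB; rewrite setTI.
have := hs _ mC; rewrite /pushforward /=.
have -> : (@Meta R _ Y) @^-1` (Phi @^-1` B) = th @^-1` B.
  apply/seteqP; split => y /=.
    exact: (giry_sat mB _ _ (Phi_ret y)).
  by apply: (giry_sat mB) => A mA; rewrite (Phi_ret y A mA).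
by move=> <-; rewrite !diracE.
Qed.

Lemma Phi_MD {s : giry Y R} (hs : @MDset R _ Y s) : @MDset R _ X (Phi s).
Proof.
move=> B mB; rewrite key //.
have mB' : measurable (@Meta R _ X @^-1` B).
  by have := @measurable_giry_ret _ X R measurableT B mB; rewrite setTI.
rewrite /pushforward /= giry_int_map //; last exact: measurable_giry_ev.
have mthB : measurable (th @^-1` B) by have := mth measurableT B mB; rewrite setTI.
rewrite -(setIT (th @^-1` B)) -integral_indic //.
apply: eq_integral => y _ /=.
rewrite /giry_ev; have := proj2_sig y B mB; rewrite /pushforward => <-.
rewrite diracE indicE; congr (_%:R%:E); try by apply/idP/idP => /set_mem h; apply/mem_set.
Qed.

Definition mM (rho : MD R Y) : Y :=
  exist _ (Phi (Mtheta rho)) (Phi_MD (proj2_sig rho)).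

Lemma gM_proof (p : Y) : @MDset R _ Y (giry_ret p).
Proof. by move=> B mB; rewrite /pushforward /=. Qed.

Definition gM (p : Y) : MD R Y := exist _ (giry_ret p) (gM_proof p).

Lemma partB_X :
    exists m : MD R (MD R X) -> MD R X,
      measurable_fun setT m /\
      (forall rho : MD R (MD R X),
         meq (Mtheta (m rho)) (Mmu (pushforward (Mtheta rho) (@Mtheta R d X)))) /\
      exists g : MD R X -> MD R (MD R X),
        measurable_fun setT g /\
        (forall p : MD R X, meq (Mtheta (m (g p))) (Mtheta p)) /\
        (forall rho : MD R (MD R X), meq (Mtheta (g (m rho))) (Mtheta rho)).
Proof.
exists mM; split.
  apply: meas_into_MD.
  exact: measurableT_comp mPhi (@mth_gen R _ Y).
split.
  by move=> rho A mA.
exists gM; split.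
  apply: meas_into_MD.
  exact: measurable_giry_ret.
split.
  by move=> p; exact: Phi_ret.
move=> rho _ [B mB <-]; rewrite setTI.
have := key (proj2_sig rho) mB.
rewrite [X in _ = X -> _]/= => <-.
rewrite /= !diracE; congr (_%:R%:E); try by apply/idP/idP => /set_mem h; apply/mem_set.
Qed.

End PartB.

From mathcomp Require Import finmap.

Section PartC.

Definition meets {T} (A U : set T) := A `&` U !=set0.

Definition Irr {Y : topologicalType} (C : set Y) :=
  C !=set0 /\ forall U V, open U -> open V -> meets C U -> meets C V -> meets C (U `&` V).

Lemma Irr_seq {Y : topologicalType} (C : set Y) : Irr C ->
  forall s : seq (set Y), (forall U, U \in s -> open U /\ meets C U) ->
   open [set x | forall U, U \in s -> U x] /\ meets C [set x | forall U, U \in s -> U x].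
Proof.
move=> [[x Cx] irr]; elim=> [|U s IH] h.
  split; last by exists x; split.
  rewrite (_ : [set x | _] = setT); first exact: openT.
  by apply/seteqP; split=> // y _ U; rewrite in_nil.
have [oU mU] := h U (mem_head _ _).
have [os ms] : open [set x | forall U, U \in s -> U x] /\ meets C [set x | forall U, U \in s -> U x].
  by apply: IH => V Vs; apply: h; rewrite in_cons Vs orbT.
have -> : [set x | forall V, V \in U :: s -> V x] = U `&` [set x | forall U, U \in s -> U x].
  apply/seteqP; split=> y.
    by move=> hy; split; [apply: hy; exact: mem_head|move=> V Vs; apply: hy; rewrite in_cons Vs orbT].
  by move=> [Uy sy] V; rewrite in_cons => /orP[/eqP ->//|]; exact: sy.
split; first exact: openI.
exact: irr.
Qed.

Lemma Irr_fin {Y : topologicalType} {C : set Y} : Irr C -> forall F : {fset set Y},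
  (forall U, U \in F -> open U /\ meets C U) -> exists x, C x /\ forall U, U \in F -> U x.
Proof.
move=> irr F h.
have [_ [x [Cx Fx]]] := @Irr_seq _ _ irr (enum_fset F) h.
by exists x; split.
Qed.

Lemma cl_open {Z : topologicalType} {A : set Z} {x U} :
  closure A x -> open U -> U x -> meets A U.
Proof. by move=> h oU Ux; apply: h; apply: open_nbhs_nbhs. Qed.

Lemma cl_sing {Z : topologicalType} {a b : Z} {U} :
  closure [set a] b -> open U -> U b -> U a.
Proof. by move=> h oU Ub; have [y [/= -> ?]] := cl_open h oU Ub. Qed.

Lemma clU {Z : topologicalType} {A : set Z} {U} :
  open U -> meets (closure A) U <-> meets A U.
Proof.
move=> oU; split; first by case=> x [hx Ux]; exact: cl_open hx oU Ux.
by case=> x [Ax Ux]; exists x; split => //; exact: subset_closure.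
Qed.

Lemma Hval_inj {Y : topologicalType} (C C' : Hsp Y) : Hval C = Hval C' -> C = C'.
Proof.
case: C C' => [A hA] [B hB] /= AB; subst; by rewrite (Prop_irrelevance hA hB).
Qed.

Lemma HD_inj {Y : topologicalType} (C C' : HD Y) : Htheta C = Htheta C' -> C = C'.
Proof.
case: C C' => [A hA] [B hB] AB; have AB' : A = B by exact: AB.
subst; by rewrite (Prop_irrelevance hA hB).
Qed.

Definition dia {Y : topologicalType} (U : set Y) : set (Hsp Y) :=
  [set C : Hsp Y | meets (Hval C) U].

Lemma open_dia {Y : topologicalType} {U : set Y} : open U -> open (dia U).
Proof.
move=> oU. rewrite /open /=.
exists [set dia U].
  move=> _ ->.
  exact: (@finI_from1 (set Y) (Hsp Y) open (fun U => [set C : Hsp Y | (proj1_sig C `&` U) !=set0]) U oU).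
by rewrite bigcup_set1.
Qed.

Lemma nbhsH {Y : topologicalType} (C : Hsp Y) (A : set (Hsp Y)) : nbhs C A ->
  exists F : {fset set Y}, (forall U, U \in F -> open U) /\
    (forall U, U \in F -> meets (Hval C) U) /\
    (forall C', (forall U, U \in F -> meets (Hval C') U) -> A C').
Proof.
rewrite /nbhs /=. rewrite /nbhs_of_open.
case=> B [oB BC BA]. move: oB => [D' D'sub eB].
move: BC; rewrite -eB => -[i D'i iC].
have := D'sub i D'i.
rewrite /isBaseTopological.D /= /topology_structure.Builders_21.HB_unnamed_factory_23 /=.
case=> F Fsub Fi.
exists F; split; first by move=> U UF; have /set_mem := Fsub U UF.
split.
  move=> U UF; move: iC; rewrite -Fi; apply; exact: UF.
move=> C' h; apply: BA; rewrite -eB; exists i => //. have : i C' by rewrite -Fi => U UF; exact: h. by [].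
Qed.

Lemma eta_dia {Y : topologicalType} (x : Y) {U} : open U -> dia U (Heta x) <-> U x.
Proof.
move=> oU; split.
  by case=> y [cy Uy]; exact: cl_sing cy oU Uy.
by move=> Ux; exists x; split => //; exact: subset_closure.
Qed.

Lemma HDsetE {Y : topologicalType} (C : Hsp Y) :
  @HDset Y C <-> closure [set C] = closure (Heta @` Hval C).
Proof.
rewrite /HDset /=; split => [/(congr1 Hval)//| h]; exact: Hval_inj.
Qed.

Lemma HD_Irr {Y : topologicalType} (C : Hsp Y) : @HDset Y C -> Irr (Hval C).
Proof.
move/HDsetE => e.
have hC : closure (Heta @` Hval C) C by rewrite -e; exact: subset_closure.
split.
  have [_ [[x Cx <-] _]] := cl_open hC openT (I : setT C).
  by exists x.
move=> U V oU oV mU mV.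
have [_ [[x Cx <-] [dU dV]]] := cl_open hC (openI (open_dia oU) (open_dia oV)) (conj mU mV).
exists x; split => //; split; [exact/(eta_dia x oU)|exact/(eta_dia x oV)].
Qed.

Lemma Irr_HD {Y : topologicalType} (C : Hsp Y) : Irr (Hval C) -> @HDset Y C.
Proof.
move=> irr; apply/HDsetE; apply/seteqP; split.
- have hC : closure (Heta @` Hval C) C.
    move=> A /nbhsH [F [oF [mF hF]]].
    have [x [Cx Fx]] := Irr_fin irr F (fun U UF => conj (oF U UF) (mF U UF)).
    exists (Heta x); split; first by exists x.
    by apply: hF => U UF; apply/(eta_dia x (oF U UF)); exact: Fx.
  move=> D hD.
  have cc : closed (closure (Heta @` Hval C)) by exact: closed_closure.
  rewrite (proj1 (closure_id _) cc).
  by apply: (closureS _ hD) => _ ->.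
- have hC : Heta @` Hval C `<=` closure [set C].
    move=> _ [x Cx <-] A /nbhsH [F [oF [mF hF]]].
    exists C; split => //; apply: hF => U UF.
    have /(eta_dia x (oF U UF)) Ux := mF U UF.
    by exists x.
  move=> D hD.
  have cc : closed (closure [set C]) by exact: closed_closure.
  rewrite (proj1 (closure_id _) cc).
  exact: (closureS hC hD).
Qed.

Lemma open_pre {Y : topologicalType} {W : set (Hsp Y)} : open W -> open (@Htheta Y @^-1` W).
Proof. by move=> oW; exists W. Qed.

Lemma nbhsD {Y : topologicalType} (D : HD Y) (A : set (HD Y)) : nbhs D A ->
  exists F : {fset set Y}, (forall U, U \in F -> open U) /\
    (forall U, U \in F -> meets (Hval (Htheta D)) U) /\
    (forall D', (forall U, U \in F -> meets (Hval (Htheta D')) U) -> A D').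
Proof.
rewrite /nbhs /= /nbhs_of_open.
case=> B [[W oW eB] WD BA].
have : nbhs (Htheta D) W.
  apply: open_nbhs_nbhs; split => //. by move: WD; rewrite -eB.
case/nbhsH=> F [oF [mF hF]].
exists F; split => //; split => // D' h; apply: BA; rewrite -eB; exact: hF.
Qed.

Lemma HD_irr {Y : topologicalType} (D : HD Y) : Irr (Hval (Htheta D)).
Proof. apply: HD_Irr; exact: set_valP D. Qed.

Lemma cl_sub {Y : topologicalType} {D E : HD Y} :
  closure [set E] D -> Hval (Htheta D) `<=` Hval (Htheta E).
Proof.
move=> h x Dx; apply: contrapT => nEx.
have oU : open (~` Hval (Htheta E)) by apply: closed_openC; exact: (proj2_sig (Htheta E)).
have := cl_sing h (open_pre (open_dia oU)).
case.
  by exists x.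
by move=> y [Ey nEy].
Qed.

Lemma cont_HD (Z : topologicalType) (Y : topologicalType) (f : Z -> HD Y) :
  (forall U, open U -> open [set z | meets (Hval (Htheta (f z))) U]) -> continuous f.
Proof.
move=> h z A /nbhsD [F [oF [mF hF]]].
apply: (filterS _ (filter_bigI (D := F)
   (f := fun U => [set z | meets (Hval (Htheta (f z))) U]) _ _)).
- by move=> z' hz'; apply: hF => U UF; exact: hz' U UF.
- by move=> U UF; apply: open_nbhs_nbhs; split; [exact: h (oF U UF)| exact: mF U UF].
Qed.

Variable X : topologicalType.

Definition c0 (c : HD (HD X)) : set (HD X) := Hval (Htheta c).
Definition K (c : HD (HD X)) : set X :=
  \bigcup_(C in Hval (Hmap Htheta (Htheta c))) Hval C.

Lemma Ksub c D : c0 c D -> Hval (Htheta D) `<=` K c.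
Proof.
move=> cD x Dx; exists (Htheta D) => //.
by apply: subset_closure; exists D.
Qed.

Lemma KU c {U} : open U ->
  meets (K c) U <-> exists2 D, c0 c D & meets (Hval (Htheta D)) U.
Proof.
move=> oU; split.
  case=> x [[C hC Cx] Ux].
  have [_ [[D cD <-] dU]] := cl_open hC (open_dia oU) (ex_intro _ x (conj Cx Ux)).
  by exists D.
case=> D cD [x [Dx Ux]]; exists x; split => //; exact: Ksub cD x Dx.
Qed.

Lemma m_HD c : @HDset X (Hmu (Hmap Htheta (Htheta c))).
Proof.
apply: Irr_HD => /=.
have irrc := HD_irr c.
split.
  have [D cD] := irrc.1.
  have [x Dx] := (HD_irr D).1.
  by exists x; apply: subset_closure; exact: Ksub cD x Dx.
move=> U V oU oV /(clU oU)/(KU _ oU) [D1 cD1 m1] /(clU oV)/(KU _ oV) [D2 cD2 m2].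
apply/(clU (openI oU oV))/(KU _ (openI oU oV)).
have [D [cD [dU dV]]] := irrc.2 _ _ (open_pre (open_dia oU)) (open_pre (open_dia oV))
  (ex_intro _ D1 (conj cD1 m1)) (ex_intro _ D2 (conj cD2 m2)).
by exists D => //; exact: (HD_irr D).2 _ _ oU oV dU dV.
Qed.

Definition mH (c : HD (HD X)) : HD X :=
  exist _ (Hmu (Hmap Htheta (Htheta c))) (mem_set (m_HD c)).

Lemma g_HD (C : HD X) : @HDset (HD X) (Heta C).
Proof.
apply: Irr_HD => /=; split.
  by exists C; exact: subset_closure.
move=> O1 O2 o1 o2 [D1 [h1 d1]] [D2 [h2 d2]].
exists C; split; first exact: subset_closure.
by split; [exact: cl_sing h1 o1 d1|exact: cl_sing h2 o2 d2].
Qed.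

Definition gH (C : HD X) : HD (HD X) := exist _ (Heta C) (mem_set (g_HD C)).

Lemma mH_cont : continuous mH.
Proof.
apply: cont_HD => U oU.
rewrite (_ : [set z | _] = Htheta @^-1` dia (Htheta @^-1` dia U)).
  exact: open_pre (open_dia (open_pre (open_dia oU))).
apply/seteqP; split => c /=.
  by move=> /(clU oU)/(KU _ oU) [D cD mD]; exists D.
by case=> D [cD mD]; apply/(clU oU)/(KU _ oU); exists D.
Qed.

Lemma gH_cont : continuous gH.
Proof.
apply: cont_HD => O oO.
rewrite (_ : [set z | _] = O) //.
apply/seteqP; split => C /=.
  by case=> D [h d]; exact: cl_sing h oO d.
by move=> OC; exists C; split => //; exact: subset_closure.
Qed.

Lemma gHK : cancel gH mH.
Proof.
move=> C; apply: HD_inj; apply: Hval_inj => /=.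
apply/seteqP; split.
  have cC : closed (Hval (Htheta C)) := proj2_sig (Htheta C).
  rewrite [X in _ `<=` X](proj1 (closure_id _) cC).
  apply: closureS.
  move=> x [C' hC' C'x]; apply: contrapT => nCx.
  have oU : open (~` Hval (Htheta C)) by apply: closed_openC.
  have [_ [[D hD <-] dU]] := cl_open hC' (open_dia oU) (ex_intro _ x (conj C'x nCx)).
  have [y [Cy nCy]] := cl_sing hD (open_pre (open_dia oU)) dU.
  exact: nCy Cy.
move=> x Cx; apply: subset_closure; exists (Htheta C) => //.
by apply: subset_closure; exists C => //; exact: subset_closure.
Qed.

Lemma mHK : cancel mH gH.
Proof.
move=> c; apply: HD_inj; apply: Hval_inj => /=.
apply/seteqP; split; last first.
  move=> D cD A /nbhsD [F [oF [mF hF]]].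
  exists (mH c); split => //; apply: hF => U UF /=.
  have [x [Dx Ux]] := mF U UF.
  by exists x; split => //; apply: subset_closure; exact: Ksub cD x Dx.
move=> D' hD'.
have cc : closed (Hval (Htheta c)) := proj2_sig (Htheta c).
rewrite (proj1 (closure_id _) cc).
move=> A /nbhsD [F [oF [mF hF]]].
have [x [D'x Fx]] := Irr_fin (HD_irr D') F (fun U UF => conj (oF U UF) (mF U UF)).
have xK : closure (K c) x := cl_sub hD' x D'x.
have nb : nbhs x (\bigcap_(i in [set` F]) i).
  apply: filter_bigI => U UF; apply: open_nbhs_nbhs; split; [exact: oF|exact: Fx].
have [y [[C' hC' C'y] Fy]] := xK _ nb.
have nb2 : nbhs C' (\bigcap_(i in [set` F]) dia i).
  apply: filter_bigI => U UF; apply: open_nbhs_nbhs; split; first exact: open_dia (oF U UF).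
  by exists y; split => //; exact: Fy.
have [_ [[D cD <-] hD]] := hC' _ nb2.
exists D; split => //; apply: hF => U UF; exact: hD U UF.
Qed.

End PartC.

Lemma partC : forall X : topologicalType,
    exists m : HD (HD X) -> HD X,
      continuous m /\
      (forall c : HD (HD X), Htheta (m c) = Hmu (Hmap Htheta (Htheta c))) /\
      exists g : HD X -> HD (HD X),
        continuous g /\ cancel g m /\ cancel m g.
Proof.
move=> X; exists (@mH X); split; first exact: mH_cont.
split; first by [].
exists (@gH X); split; first exact: gH_cont.
split; [exact: gHK|exact: mHK].
Qed.

(* For each monad T (P, M, H) the multiplication m_X : DDX -> DX of the
   associated monad D -- the unique morphism with
   theta_X o m_X = mu_X o T theta_X o theta_{DX} -- exists and is an
   isomorphism (in Meas: measurable with measurable inverse, equality of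
   points of DX / DDX being equality of the underlying measures on
   measurable sets; in Top: a homeomorphism). *)
Theorem theorem5p6 :
  (* (a) Giry monad P of probability measures *)
  (forall (R : realType) (d : measure_display) (X : measurableType d),
    exists m : PD R (PD R X) -> PD R X,
      measurable_fun setT m /\
      (forall rho : PD R (PD R X),
         meq (Ptheta (m rho) : probability X R)
             (Pmu (pushforward (Ptheta rho : probability (PD R X) R)
                               (@Ptheta R d X)))) /\
      exists g : PD R X -> PD R (PD R X),
        measurable_fun setT g /\
        (forall p : PD R X,
           meq (Ptheta (m (g p)) : probability X R) (Ptheta p : probability X R)) /\
        (forall rho : PD R (PD R X),
           meq (Ptheta (g (m rho)) : probability (PD R X) R)
               (Ptheta rho : probability (PD R X) R))) /\
  (* (b) monad M of subprobability measures *)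
  (forall (R : realType) (d : measure_display) (X : measurableType d),
    exists m : MD R (MD R X) -> MD R X,
      measurable_fun setT m /\
      (forall rho : MD R (MD R X),
         meq (Mtheta (m rho)) (Mmu (pushforward (Mtheta rho) (@Mtheta R d X)))) /\
      exists g : MD R X -> MD R (MD R X),
        measurable_fun setT g /\
        (forall p : MD R X, meq (Mtheta (m (g p))) (Mtheta p)) /\
        (forall rho : MD R (MD R X), meq (Mtheta (g (m rho))) (Mtheta rho))) /\
  (* (c) lower Vietoris monad H on Top *)
  (forall X : topologicalType,
    exists m : HD (HD X) -> HD X,
      continuous m /\
      (forall c : HD (HD X), Htheta (m c) = Hmu (Hmap Htheta (Htheta c))) /\
      exists g : HD X -> HD (HD X),
        continuous g /\ cancel g m /\ cancel m g).
Proof.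
split; first exact: partA_X.
split; first exact: partB_X.
exact: partC.
Qed.
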